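(* Let $n\ge 1$, $m=4+n$, and consider pure $SU(N)$ Yang–Mills theory on the flat manifold $\mathcal{M}^m=\mathcal{M}^4\times\mathcal{N}^n$, where $\mathcal{N}^n=S^1/Z_2\times\cdots\times S^1/Z_2$ ($n$ copies, with circles of radii $R_1,\dots,R_n$), with Lagrangian $\mathcal{L}_{YM}=-\tfrac14\mathcal{F}^a_{MN}\mathcal{F}_a^{MN}$, gauge fields $\mathcal{A}^a_M(x,y)$ and canonical momenta $\pi^M_a=\mathcal{F}^{M0}_a$. Its primary constraints are $\phi^{(1)}_a=\pi^0_a\approx 0$. Under the canonical transformation defined by the Fourier (Kaluza–Klein) expansions of the fields and momenta described in the context, the set of primary constraints $\pi^0_a(x,y)\approx 0$ of the $m$-dimensional theory is mapped faithfully (i.e. equivalently, in both directions) onto the set of primary constraints $$\phi^{(1)(0,\dots,0)}_a=\pi^{(0,\dots,0)0}_a\approx0,\qquad \phi^{(1)(\underline m_1,\dots,\underline m_n)}_a=\pi^{(\underline m_1,\dots,\underline m_n)0}_a\approx 0$$ for all $(\underline m_1,\dots,\underline m_n)\in\mathbb{Z}_{\ge0}^n\setminus\{(0,\dots,0)\}$ and all $a$, which are the primary constraints of the compactified four-dimensional theory.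
   Context: Coordinates are $(x,y)$ with $x\in\mathcal{M}^4$ (indices $\mu=0,1,2,3$) and $y=(y^1,\dots,y^n)$ the extra coordinates (indices $\bar\mu=5,\dots,4+n$). Fields are periodic, $\mathcal{A}^a_M(x,y+R)=\mathcal{A}^a_M(x,y)$ with $R=(R_1,\dots,R_n)$, and satisfy parity conditions $\mathcal{A}^a_\mu(x,-y)=\mathcal{A}^a_\mu(x,y)$, $\mathcal{A}^a_{\bar\mu}(x,-y)=-\mathcal{A}^a_{\bar\mu}(x,y)$. Writing $\theta_{\underline m}(y)=2\pi\sum_{i=1}^n \underline m_i y^i/R_i$ and $P=\prod_{i}R_i$, and letting $\sum'$ denote the sum over all $(\underline m_1,\dots,\underline m_n)\in\mathbb{Z}_{\ge0}^n$ except $(0,\dots,0)$, the expansions are $\mathcal{A}^a_\mu=P^{-1/2}A^{(0,\dots,0)a}_\mu(x)+(2/P)^{1/2}\sum' A^{(\underline m)a}_\mu(x)\cos\theta_{\underline m}(y)$, $\mathcal{A}^a_{\bar\mu}=(2/P)^{1/2}\sum' A^{(\underline m)a}_{\bar\mu}(x)\sin\theta_{\underline m}(y)$, and identically for momenta: $\pi^\mu_a=P^{-1/2}\pi^{(0,\dots,0)\mu}_a(x)+(2/P)^{1/2}\sum'\pi^{(\underline m)\mu}_a(x)\cos\theta_{\underline m}(y)$, $\pi^{\bar\mu}_a=(2/P)^{1/2}\sum'\pi^{(\underline m)\bar\mu}_a(x)\sin\theta_{\underline m}(y)$. The pairs $(A^{(\cdot)a}_M,\pi^{(\cdot)M}_a)$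 are the canonical pairs of the compactified theory obtained by integrating the Lagrangian over $y\in\prod_i[0,R_i]$. *)

(* Defs.v *)
From HB Require Import structures.
From mathcomp Require Import all_boot all_order all_algebra.
From mathcomp Require Import all_classical all_reals all_analysis.
Set Implicit Arguments. Unset Strict Implicit. Unset Printing Implicit Defensive.
Import Order.TTheory GRing.Theory Num.Theory.
Import numFieldNormedType.Exports.
Local Open Scope ring_scope.
Local Open Scope classical_set_scope.

Definition mindex (n : nat) := 'I_n -> nat.

Definition theta (R : realType) (n : nat) (Rr : 'I_n -> R) (m : mindex n)
  (y : 'I_n -> R) : R :=
  2 * pi * \sum_(i < n) ((m i)%:R * y i / Rr i).

Definition volP (R : realType) (n : nat) (Rr : 'I_n -> R) : R := \prod_(i < n) Rr i.

Definition is_zero_mode (n : nat) (m : mindex n) : Prop := forall i, m i = 0%N.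

Definition cos_mode (R : realType) (n : nat) (Rr : 'I_n -> R) (m : mindex n)
  (y : 'I_n -> R) : R :=
  if asbool (is_zero_mode m) then Num.sqrt ((volP Rr)^-1)
  else Num.sqrt (2 / volP Rr) * cos (theta Rr m y).

Definition cube_sum (R : realType) (n : nat) (K : nat) (f : mindex n -> R) : R :=
  \sum_(k : {ffun 'I_n -> 'I_K.+1}) f (fun i => nat_of_ord (k i)).

Definition abs_summable (R : realType) (n : nat) (c : mindex n -> R) : Prop :=
  exists B : R, forall K, cube_sum K (fun m => `|c m|) <= B.

(* the function f(y) is given by the KK cosine expansion with coefficients c,
   i.e. f(y) = P^{-1/2} c_0 + (2/P)^{1/2} sum' c_m cos theta_m(y) *)
Definition cos_expansion (R : realType) (n : nat) (Rr : 'I_n -> R)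
  (c : mindex n -> R) (f : ('I_n -> R) -> R) : Prop :=
  forall y, (fun K => cube_sum K (fun m => c m * cos_mode Rr m y)) @ \oo --> f y.

(* Main.v *)
Require Import Defs.
From HB Require Import structures.
From mathcomp Require Import all_boot all_order all_algebra.
From mathcomp Require Import all_classical all_reals all_analysis.
From mathcomp Require Import ring lra zify.
From Stdlib Require Import Lia.
Import Order.TTheory GRing.Theory Num.Theory.
Import numFieldNormedType.Exports.
Local Open Scope ring_scope.
Local Open Scope classical_set_scope.
Section T.
Variable R : realType.

Lemma cos_per (x : R) (k : nat) : cos (x + 2 * pi * k%:R) = cos x.
Proof.
elim: k => [|k IH]; first by rewrite mulr0 addr0.
have -> : x + 2 * pi * k.+1%:R = (x + 2 * pi * k%:R) + pi *+ 2.
  by rewrite -natr1 mulr2n; ring.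
by rewrite cosD2pi.
Qed.

Lemma sin_per (x : R) (k : nat) : sin (x + 2 * pi * k%:R) = sin x.
Proof.
elim: k => [|k IH]; first by rewrite mulr0 addr0.
have -> : x + 2 * pi * k.+1%:R = (x + 2 * pi * k%:R) + pi *+ 2.
  by rewrite -natr1 mulr2n; ring.
by rewrite sinD2pi.
Qed.

Lemma cos_perB (x : R) (k : nat) : cos (x - 2 * pi * k%:R) = cos x.
Proof. by rewrite -(cos_per (x - _) k) subrK. Qed.
Lemma sin_perB (x : R) (k : nat) : sin (x - 2 * pi * k%:R) = sin x.
Proof. by rewrite -(sin_per (x - _) k) subrK. Qed.

Lemma cos_ne1 (h : R) : 0 < `|h| < 2 * pi -> cos h != 1.
Proof.
move=> /andP[h0 h2]; rewrite -cos_norm.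
set u := `|h| / 2.
have -> : `|h| = u *+ 2 by rewrite /u mulr2n; field.
rewrite cos_mulr2n; apply/negP => /eqP e.
have c2 : cos u ^+ 2 = 1 by move: e; rewrite mulr2n; lra.
have : `|cos u| == 1.
  by rewrite -(@eqrXn2 _ 2) ?normr_ge0 // real_normK ?num_real // c2 expr1n.
rewrite norm_cos_eq1 => /eqP s0.
have : 0 < sin u by apply: sin_gt0_pi; rewrite /u; apply/andP; split; lra.
by rewrite s0 ltxx.
Qed.
End T.
Section V.
Variable R : realType.
Variables (n M : nat).
Hypothesis M0 : (0 < M)%N.

Definition Phi (d : 'I_n -> R) (j : {ffun 'I_n -> 'I_M}) : R :=
  2 * pi * \sum_(i < n) (d i * (j i)%:R / M%:R).

Lemma shift_sum (d : 'I_n -> R) (i0 : 'I_n) (j j' : {ffun 'I_n -> 'I_M}) :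
  (forall i, i != i0 -> j' i = j i) ->
  Phi d j' = Phi d j + 2 * pi * (d i0 * ((j' i0)%:R - (j i0)%:R) / M%:R).
Proof.
move=> hj; rewrite /Phi (bigD1 i0) //= [X in _ = 2 * pi * X + _](bigD1 i0) //=.
rewrite (eq_bigr (fun i => d i * (j i)%:R / M%:R)); last by move=> i /hj ->.
ring.
Qed.

Lemma vanish (d : 'I_n -> R) (i0 : 'I_n) (a b : nat) :
  (a < M)%N -> (b < M)%N -> a != b -> d i0 = a%:R - b%:R ->
  \sum_(j : {ffun 'I_n -> 'I_M}) cos (Phi d j) = 0.
Proof.
move=> aM bM ab di0.
pose tau (j : {ffun 'I_n -> 'I_M}) : {ffun 'I_n -> 'I_M} :=
  [ffun i => if i == i0 then ordS (j i) else j i].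
have tau_inj : injective tau.
  move=> j1 j2 e; apply/ffunP => i.
  have := congr1 (fun f : {ffun 'I_n -> 'I_M} => f i) e; rewrite /tau !ffunE.
  by case: eqP => // _; apply: ordS_inj.
pose h := 2 * pi * (d i0 / M%:R).
have Mr : (0 : R) < M%:R by rewrite ltr0n.
have key : forall j, exists k : nat,
    Phi d (tau j) = Phi d j + h + 2 * pi * (b * k)%:R - 2 * pi * (a * k)%:R.
  move=> j; rewrite (@shift_sum d i0 j (tau j)); last first.
    by move=> i ni; rewrite /tau ffunE (negbTE ni).
  rewrite /tau ffunE eqxx /=.
  have jM := ltn_ord (j i0).
  case: (ltnP (j i0).+1 M) => hM.
    exists 0%N; rewrite !muln0 modn_small //= /h -natr1.
    field; lra.
  have eM : (j i0).+1 = M by apply/eqP; rewrite eqn_leq hM jM.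
  exists 1%N; rewrite !muln1 eM modnn /h di0.
  have eR : (M%:R : R) = (j i0)%:R + 1 by rewrite -[M in M%:R]eM -natr1.
  rewrite eR; field; lra.
have kc : forall j, cos (Phi d (tau j)) = cos (Phi d j + h).
  move=> j; have [k ->] := key j.
  by rewrite cos_perB cos_per.
have ks : forall j, sin (Phi d (tau j)) = sin (Phi d j + h).
  move=> j; have [k ->] := key j.
  by rewrite sin_perB sin_per.
set C := \sum_j cos (Phi d j).
set S := \sum_j sin (Phi d j).
have eC : C = C * cos h - S * sin h.
  rewrite {1}/C (reindex_inj tau_inj) /=.
  under eq_bigr do rewrite kc cosD.
  by rewrite sumrB -!mulr_suml.
have eS : S = S * cos h + C * sin h.
  rewrite {1}/S (reindex_inj tau_inj) /=.
  under eq_bigr do rewrite ks sinD.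
  by rewrite big_split /= -!mulr_suml addrC.
have hne : cos h != 1.
  apply: cos_ne1.
  have dlt : 0 < `|d i0 / M%:R| < 1.
    rewrite normrM [`|_^-1|]ger0_norm ?invr_ge0 ?ler0n //.
    rewrite ltr_pdivrMr // mul1r pmulr_lgt0 ?invr_gt0 // normr_gt0 di0 subr_eq0 eqr_nat ab /=.
    rewrite ltr_norml; apply/andP; split.
      have : (b%:R : R) < M%:R by rewrite ltr_nat.
      have : (0 : R) <= a%:R by rewrite ler0n.
      lra.
    have : (a%:R : R) < M%:R by rewrite ltr_nat.
    have : (0 : R) <= b%:R by rewrite ler0n.
    lra.
  rewrite /h normrM (ger0_norm (x := 2 * pi)); last by have := pi_gt0 R; lra.
  have := pi_gt0 R; move: dlt; set t := `|_|; move=> /andP[t0 t1] p0.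
  apply/andP; split; nra.
have s2 := cos2Dsin2 h.
have : C * (2 - 2 * cos h) = 0.
  have e1 : C * (1 - cos h) = - S * sin h by move: eC; lra.
  have e2 : S * (1 - cos h) = C * sin h by move: eS; lra.
  have : C * (1 - cos h) ^+ 2 = - C * sin h ^+ 2.
    transitivity (C * (1 - cos h) * (1 - cos h)); first by ring.
    rewrite e1; transitivity (- sin h * (S * (1 - cos h))); first by ring.
    by rewrite e2; ring.
  move=> e3.
  have -> : C * (2 - 2 * cos h) = C * (1 - cos h) ^+ 2 + C * sin h ^+ 2.
    rewrite (_ : sin h ^+ 2 = 1 - cos h ^+ 2); last by lra.
    ring.
  by rewrite e3; ring.
move/eqP; rewrite mulf_eq0 => /orP[/eqP //|].
rewrite subr_eq0 => /eqP e; move: hne; have -> : cos h = 1.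
  by apply: (mulfI (x := 2)) => //; rewrite -e mulr1.
by rewrite eqxx.
Qed.
End V.
Arguments Phi {R n} M d j.
Arguments vanish {R n M} M0 d i0 a b.
Section Cube.
Variable R : realType.
Variable n : nat.

Definition inL (L : nat) {K : nat} (x : {ffun 'I_n -> 'I_K.+1}) : bool :=
  [forall i, (x i <= L)%N].

Lemma cube_reindex (L K : nat) (h : mindex n -> R) : (L <= K)%N ->
  \sum_(x : {ffun 'I_n -> 'I_K.+1} | inL L x) h (fun i => nat_of_ord (x i))
  = cube_sum L h.
Proof.
move=> LK; rewrite /cube_sum.
have LK1 : (L.+1 <= K.+1)%N by [].
pose wid (x : {ffun 'I_n -> 'I_L.+1}) : {ffun 'I_n -> 'I_K.+1} :=
  [ffun i => widen_ord LK1 (x i)].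
pose nar (x : {ffun 'I_n -> 'I_K.+1}) : {ffun 'I_n -> 'I_L.+1} :=
  [ffun i => inord (x i)].
rewrite (reindex_onto wid nar); last first.
  move=> x /forallP hx; apply/ffunP => i; rewrite !ffunE; apply: val_inj => /=.
  by rewrite inordK // ltnS hx.
apply: eq_big.
  move=> x; rewrite /inL; apply/andP; split.
    by apply/forallP => i; rewrite ffunE /= -ltnS.
  apply/eqP/ffunP => i; rewrite !ffunE; apply: val_inj => /=.
  by rewrite inordK.
by move=> x _; congr h; apply: funext => i; rewrite ffunE.
Qed.

Lemma cube_sum_ge0 K (h : mindex n -> R) : (forall m, 0 <= h m) -> 0 <= cube_sum K h.
Proof. by move=> hp; apply: sumr_ge0 => x _. Qed.

Lemma cube_mono (L K : nat) (h : mindex n -> R) : (forall m, 0 <= h m) ->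
  (L <= K)%N -> cube_sum L h <= cube_sum K h.
Proof.
move=> hp LK; rewrite -(cube_reindex _ _ h LK) /cube_sum [X in _ <= X](bigID (inL L)) /=.
by rewrite lerDl; apply: sumr_ge0.
Qed.

Lemma cube_split (L K : nat) (h : mindex n -> R) : (L <= K)%N ->
  \sum_(x : {ffun 'I_n -> 'I_K.+1} | ~~ inL L x) h (fun i => nat_of_ord (x i))
  = cube_sum K h - cube_sum L h.
Proof.
move=> LK; rewrite -(cube_reindex _ _ h LK) /cube_sum [X in _ = X - _](bigID (inL L)) /=.
by rewrite addrC addrK.
Qed.
End Cube.
Arguments inL {n} L {K} x.
Arguments cube_reindex {R n} L K h.
Arguments cube_split {R n} L K h.
Arguments cube_mono {R n} L K h.
Section G.
Variable R : realType.
Variables (n : nat) (Rr : 'I_n -> R).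
Hypothesis hR : forall i, 0 < Rr i.
Variables (L M : nat).
Hypothesis hML : (2 * L < M)%N.

Let M0 : (0 < M)%N. Proof. by apply: leq_ltn_trans hML. Qed.

Definition yj (j : {ffun 'I_n -> 'I_M}) : 'I_n -> R :=
  fun i => Rr i * (j i)%:R / M%:R.

Lemma theta_grid (m : mindex n) j :
  theta Rr m (yj j) = Phi M (fun i => (m i)%:R) j.
Proof.
rewrite /theta /Phi /yj; congr (_ * _); apply: eq_bigr => i _.
have := hR i; have : (0:R) < M%:R by rewrite ltr0n.
move=> h1 h2; field; apply/andP; split; rewrite gt_eqF //.
Qed.

Lemma Phi_add (d1 d2 : 'I_n -> R) (j : {ffun 'I_n -> 'I_M}) :
  Phi M d1 j + Phi M d2 j = Phi M (fun i => d1 i + d2 i) j.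
Proof.
rewrite /Phi -mulrDr -big_split /=; congr (_ * _); apply: eq_bigr => i _.
by rewrite -mulrDl -mulrDl.
Qed.

Lemma Phi_sub (d1 d2 : 'I_n -> R) (j : {ffun 'I_n -> 'I_M}) :
  Phi M d1 j - Phi M d2 j = Phi M (fun i => d1 i - d2 i) j.
Proof.
rewrite /Phi -mulrBr -sumrB /=; congr (_ * _); apply: eq_bigr => i _.
by rewrite -mulrBl -mulrBl.
Qed.

Lemma Phi0 (d : 'I_n -> R) (j : {ffun 'I_n -> 'I_M}) : (forall i, d i = 0) -> Phi M d j = 0.
Proof.
by move=> h; rewrite /Phi big1 ?mulr0 // => i _; rewrite h !mul0r.
Qed.

Definition NN : R := (#|{ffun 'I_n -> 'I_M}|)%:R.

Lemma NN_gt0 : 0 < NN.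
Proof. by rewrite /NN ltr0n card_ffun card_ord expn_gt0 M0. Qed.

Lemma sum_cos0 (d : 'I_n -> R) : (forall i, d i = 0) ->
  \sum_(j : {ffun 'I_n -> 'I_M}) cos (Phi M d j) = NN.
Proof.
move=> h; under eq_bigr do rewrite Phi0 // cos0.
by rewrite sumr_const.
Qed.

Lemma cosM (a b : R) : cos a * cos b = (cos (a - b) + cos (a + b)) / 2.
Proof. by rewrite cosB cosD; field. Qed.

Definition w0 : R := Num.sqrt ((volP Rr)^-1).
Definition w1 : R := Num.sqrt (2 / volP Rr).
Definition gk (k : mindex n) : R := if asbool (is_zero_mode k) then w0 else w1 / 2.

Lemma volP_gt0 : 0 < volP Rr.
Proof. by apply: prodr_gt0 => i _; exact: hR. Qed.

Lemma gk_gt0 k : 0 < gk k.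
Proof.
have := volP_gt0 => hP.
rewrite /gk; case: ifP => _.
  by rewrite sqrtr_gt0 invr_gt0.
by rewrite divr_gt0 // sqrtr_gt0 divr_gt0.
Qed.

Definition G (k m : mindex n) : R :=
  \sum_(j : {ffun 'I_n -> 'I_M}) cos_mode Rr m (yj j) * cos (theta Rr k (yj j)).

Lemma zero_modeE {m : mindex n} : is_zero_mode m -> m = (fun _ => 0%N).
Proof. by move=> h; apply: funext => i; rewrite h. Qed.

Lemma G_eq (k m : mindex n) : (forall i, (k i <= L)%N) -> (forall i, (m i <= L)%N) ->
  G k m = if asbool (m = k) then gk k * NN else 0.
Proof.
move=> hk hm.
have lt1 : forall i, (m i < M)%N by move=> i; apply: leq_ltn_trans hML; rewrite (leq_trans (hm i)) // leq_pmull.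
have lt2 : forall i, (k i < M)%N by move=> i; apply: leq_ltn_trans hML; rewrite (leq_trans (hk i)) // leq_pmull.
rewrite /G /cos_mode.
under eq_bigr do rewrite !theta_grid.
case: (pselect (is_zero_mode m)) => zm.
  rewrite (asboolT zm) /=.
  rewrite -mulr_sumr.
  case: (pselect (is_zero_mode k)) => zk.
    have -> : m = k by rewrite (zero_modeE zm) (zero_modeE zk).
    rewrite (asboolT (erefl k)) /gk (asboolT zk) sum_cos0 //.
    by move=> i; rewrite zk.
  have [i0 hi0] : exists i0, k i0 <> 0%N by apply/existsNP.
  rewrite (vanish M0 _ i0 (k i0) 0%N) ?mulr0 //; last by rewrite subr0.
  - by rewrite asboolF // => e; apply: zk; rewrite -e.
  - by apply/eqP.
rewrite (asboolF zm).
under eq_bigr do rewrite -mulrA cosM Phi_sub Phi_add.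
rewrite -mulr_sumr.
under eq_bigr do rewrite mulrDl.
rewrite big_split /=.
have [i0 hi0] : exists i0, m i0 <> 0%N by apply/existsNP.
rewrite -mulr_suml [X in _ + X](_ : _ = 0); last first.
  rewrite -mulr_suml (vanish M0 _ i0 (m i0 + k i0) 0%N) ?mul0r //.
  - move: (hm i0) (hk i0) hML => a b c; apply: leq_ltn_trans c; lia.
  - by rewrite addn_eq0; apply/negP => /andP[/eqP].
  - by rewrite subr0 natrD.
rewrite addr0.
case: (pselect (m = k)) => emk.
  rewrite (asboolT emk) sum_cos0; last by move=> i; rewrite emk subrr.
  by rewrite /gk -emk (asboolF zm) /w1; field.
rewrite (asboolF emk).
have [i1 hi1] : exists i1, m i1 <> k i1.
  by apply/existsNP => h; apply: emk; apply: funext.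
by rewrite (vanish M0 _ i1 (m i1) (k i1)) ?mul0r ?mulr0 //; apply/eqP.
Qed.
End G.
Arguments yj {R n} Rr {M} j.
Arguments G {R n} Rr M k m.
Arguments NN {R} n M.
Arguments w0 {R n} Rr.
Arguments w1 {R n} Rr.
Arguments gk {R n} Rr k.
Arguments volP_gt0 {R n Rr} hR.
Arguments gk_gt0 {R n Rr} hR k.
Arguments NN_gt0 {R n L M} hML.
Arguments G_eq {R n Rr} hR {L M} hML {k m}.
Section Main.
Variable R : realType.
Variables (n : nat) (Rr : 'I_n -> R).
Hypothesis hR : forall i, 0 < Rr i.

Lemma w0_gt0 : 0 < w0 Rr.
Proof. by rewrite /w0 sqrtr_gt0 invr_gt0 (volP_gt0 hR). Qed.
Lemma w1_ge0 : 0 <= w1 Rr.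
Proof. exact: sqrtr_ge0. Qed.

Lemma cos_mode_bound m y : `|cos_mode Rr m y| <= w0 Rr + w1 Rr.
Proof.
have h0 := w0_gt0; have h1 := w1_ge0.
rewrite /cos_mode; case: ifP => _.
  by rewrite ger0_norm /w0 ?sqrtr_ge0 // lerDl.
rewrite normrM ger0_norm // -/(w1 Rr).
have := cos_max (theta Rr m y) => hc.
have : w1 Rr * `|cos (theta Rr m y)| <= w1 Rr * 1 by rewrite ler_wpM2l.
lra.
Qed.

Lemma G_bound (M : nat) (k m : mindex n) :
  `|G Rr M k m| <= (w0 Rr + w1 Rr) * NN n M.
Proof.
rewrite /G /NN; apply: le_trans (ler_norm_sum _ _ _) _.
rewrite -sumr_const mulr_sumr.
apply: ler_sum => j _; rewrite normrM mulr1.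
have := cos_mode_bound m (yj Rr j); have := cos_max (theta Rr k (yj Rr j)).
have := normr_ge0 (cos_mode Rr m (yj Rr j)).
have := normr_ge0 (cos (theta Rr k (yj Rr j))).
nra.
Qed.

End Main.
Section Coef.
Variable R : realType.
Variables (n : nat) (Rr : 'I_n -> R).
Hypothesis hR : forall i, 0 < Rr i.

Lemma coef_zero (c : mindex n -> R) (f : ('I_n -> R) -> R) :
  abs_summable c -> cos_expansion Rr c f -> (forall y, f y = 0) ->
  forall k, c k = 0.
Proof.
move=> [B hB] hexp hf k.
pose s K := cube_sum K (fun m => `|c m|).
have hsup : has_sup (range s).
  split; first by exists (s 0%N), 0%N.
  by exists B => _ [K _ <-]; exact: hB.
apply/eqP/negPn/negP => ck.
set W := w0 Rr + w1 Rr.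
have W0 : 0 < W by have := @w0_gt0 R n Rr hR; have := @w1_ge0 R n Rr; rewrite /W; lra.
set g := gk Rr k.
have g0 : 0 < g := gk_gt0 hR k.
set ak := `|c k|.
have ak0 : 0 < ak by rewrite normr_gt0.
set eps := ak * g / (4 * W).
have eps0 : 0 < eps by rewrite divr_gt0 ?mulr_gt0.
have [t [L0 _ sL0] ht] := sup_adherent eps0 hsup.
set Lk := (\max_(i < n) k i)%N.
set L := maxn L0 Lk.
have hk : forall i, (k i <= L)%N.
  by move=> i; rewrite (leq_trans (@leq_bigmax _ (fun i => k i) i)) // leq_maxr.
set M := (2 * L).+1.
have hML : (2 * L < M)%N by [].
have NN0 : 0 < (NN n M : R) := NN_gt0 hML.
have tail : forall K, (L <= K)%N -> s K - s L < eps.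
  move=> K LK.
  have h1 : s K <= sup (range s) by apply: sup_upper_bound => //; exists K.
  have h2 : s L0 <= s L by apply: cube_mono => //; rewrite leq_maxl.
  move: ht; rewrite -sL0; lra.
pose A K := \sum_(j : {ffun 'I_n -> 'I_M})
  cos (theta Rr k (yj Rr j)) * cube_sum K (fun m => c m * cos_mode Rr m (yj Rr j)).
have hA : A K @[K --> \oo] --> 0.
  have -> : (0:R) = \sum_(j : {ffun 'I_n -> 'I_M}) cos (theta Rr k (yj Rr j)) * f (yj Rr j).
    by rewrite big1 // => j _; rewrite hf mulr0.
  rewrite /A.
  have H := @cvg_big R _ +%R 0 xpredT add_continuous.
  refine (H _ _ \oo _
    (fun j K => cos (theta Rr k (yj Rr j)) * cube_sum K (fun m => c m * cos_mode Rr m (yj Rr j)))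
    (fun j => cos (theta Rr k (yj Rr j)) * f (yj Rr j)) _ _) => // j _.
  by apply: cvgM; [exact: cvg_cst | exact: hexp].
have dpos : 0 < ak * g * NN n M / 2 by rewrite divr_gt0 ?mulr_gt0.
have [N _ HN] := (cvgrPdist_lt _ _).1 hA _ dpos.
set K := maxn N L.
have hAK : `|0 - A K| < ak * g * NN n M / 2 by apply: HN; rewrite /= leq_maxl.
have LK : (L <= K)%N by rewrite leq_maxr.
have eA : A K = cube_sum K (fun m => c m * G Rr M k m).
  rewrite /A /cube_sum /G.
  under eq_bigr do rewrite /cube_sum mulr_sumr.
  rewrite exchange_big /=; apply: eq_bigr => x _.
  rewrite mulr_sumr; apply: eq_bigr => j _; ring.
pose kL : {ffun 'I_n -> 'I_L.+1} := [ffun i => inord (k i)].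
have ekL : (fun i => nat_of_ord (kL i)) = k.
  by apply: funext => i; rewrite /kL ffunE inordK // ltnS hk.
have e2 : \sum_(x : {ffun 'I_n -> 'I_K.+1} | inL L x)
    c (fun i => nat_of_ord (x i)) * G Rr M k (fun i => nat_of_ord (x i))
    = c k * (g * NN n M).
  rewrite (cube_reindex _ _ (fun m => c m * G Rr M k m) LK) /cube_sum.
  rewrite (bigD1 kL) //= big1 ?addr0.
    by rewrite ekL (G_eq hR hML hk hk) (asboolT (erefl k)).
  move=> x nx.
  have hx : forall i, (x i <= L)%N by move=> i; rewrite -ltnS ltn_ord.
  rewrite (G_eq hR hML hk hx) asboolF ?mulr0 // => e.
  move: nx; suff -> : x = kL by rewrite eqxx.
  apply/ffunP => i; apply: val_inj; rewrite /kL ffunE /= inordK ?ltnS ?hk //.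
  by have := congr1 (fun h => h i) e.
set S2 := \sum_(x : {ffun 'I_n -> 'I_K.+1} | ~~ inL L x)
    c (fun i => nat_of_ord (x i)) * G Rr M k (fun i => nat_of_ord (x i)).
have eAK : A K = c k * (g * NN n M) + S2 by rewrite eA /cube_sum (bigID (inL L)) /= e2.
have e3 : `|S2| <= (s K - s L) * (W * NN n M).
  rewrite /s -(cube_split _ _ _ LK) mulr_suml.
  apply: le_trans (ler_norm_sum _ _ _) _; apply: ler_sum => x _.
  by rewrite normrM ler_wpM2l //; exact: G_bound.
have e4 : (s K - s L) * (W * NN n M) < eps * (W * NN n M).
  by rewrite ltr_pM2r ?mulr_gt0 ?tail.
have e5 : eps * (W * NN n M) = ak * g * NN n M / 4.
  rewrite /eps; field; rewrite gt_eqF //.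
have e6 : `|c k * (g * NN n M)| = ak * g * NN n M.
  by rewrite normrM (ger0_norm (x := g * NN n M)) ?mulr_ge0 ?ltW // mulrA.
have e7 : `|c k * (g * NN n M)| <= `|A K| + `|S2|.
  by rewrite (_ : c k * _ = A K - S2) ?ler_normB // eAK addrK.
move: hAK; rewrite sub0r normrN => hAK.
have : 0 < ak * g * NN n M by rewrite !mulr_gt0.
move: e3 e4 e5 e6 e7 hAK.
set X := ak * g * NN n M; set Y := (s K - s L) * (W * NN n M).
lra.
Qed.
End Coef.

Theorem proposition1 (R : realType) (n : nat) (hn : (1 <= n)%N)
  (N : nat) (hN : (2 <= N)%N) (Rr : 'I_n -> R) (hR : forall i, 0 < Rr i)
  (pi0 : 'I_(N ^ 2 - 1) -> ('I_4 -> R) -> ('I_n -> R) -> R)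
  (pi0KK : 'I_(N ^ 2 - 1) -> ('I_4 -> R) -> mindex n -> R)
  (hsum : forall a x, abs_summable (pi0KK a x))
  (hexp : forall a x, cos_expansion Rr (pi0KK a x) (pi0 a x)) :
  (forall a x y, pi0 a x y = 0) <->
  ((forall a x, pi0KK a x (fun _ => 0%N) = 0) /\
   (forall a x (m : mindex n), ~ is_zero_mode m -> pi0KK a x m = 0)).
Proof.
split.
  move=> h0.
  have cz : forall a x m, pi0KK a x m = 0.
    move=> a x m; apply: (@coef_zero R n Rr hR _ _ (hsum a x) (hexp a x)) => y; exact: h0.
  by split=> [a x|a x m _]; exact: cz.
move=> [hz hnz] a x y.
have c0 : forall m, pi0KK a x m = 0.
  move=> m; case: (pselect (is_zero_mode m)) => zm.
    by rewrite (zero_modeE n zm); exact: hz.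
  exact: hnz.
have h := hexp a x y.
have e : (fun K => cube_sum K (fun m => pi0KK a x m * cos_mode Rr m y)) = fun _ => 0.
  by apply: funext => K; rewrite /cube_sum big1 // => j _; rewrite c0 mul0r.
rewrite e in h.
by apply: esym; apply: (cvg_unique _ (cvg_cst (0:R)) h).
Qed.
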